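(* Let $\lambda_1,\lambda_2>0$, $\nu\in(0,1)$ and set $c_\nu:=\nu^{\nu/(1-\nu)}-\nu^{1/(1-\nu)}$. Define $$I^{(1)}_{\mathrm{MD}}(x):=\begin{cases}c_\nu\left(\frac{x}{\lambda_1}\right)^{1/(1-\nu)} & x\geq0,\\ c_\nu\left(\frac{x}{-\lambda_2}\right)^{1/(1-\nu)} & x<0,\end{cases}$$ and define $I^{(2)}_{\mathrm{MD},\underline{\lambda}}$ as follows: if $\lambda_1=\lambda_2=\lambda$, $I^{(2)}_{\mathrm{MD},\underline{\lambda}}(x):=((\nu/2)^{\nu/(2-\nu)}-(\nu/2)^{2/(2-\nu)})\left(\frac{x^2}{\lambda}\right)^{1/(2-\nu)}$ for all $x\in\mathbb{R}$; if $\lambda_1>\lambda_2$, $I^{(2)}_{\mathrm{MD},\underline{\lambda}}(x):=c_\nu\left(\frac{x}{\lambda_1-\lambda_2}\right)^{1/(1-\nu)}$ for $x\geq0$ and $:=\infty$ for $x<0$; if $\lambda_1<\lambda_2$, $I^{(2)}_{\mathrm{MD},\underline{\lambda}}(x):=c_\nu\left(\frac{x}{-(\lambda_2-\lambda_1)}\right)^{1/(1-\nu)}$ for $x\leq0$ and $:=\infty$ for $x>0$. Then $I^{(1)}_{\mathrm{MD}}(0)=I^{(2)}_{\mathrm{MD},\underline{\lambda}}(0)=0$, and for $x\neq0$: (1) if $\lambda_1\neq\lambda_2$, then $I^{(2)}_{\mathrm{MD},\underline{\lambda}}(x)>I^{(1)}_{\mathrm{MD}}(x)>0$; (2) if $\lambda_1=\lambda_2=\lambda$,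 there exists $\delta_{\nu,\lambda}>0$ such that $I^{(2)}_{\mathrm{MD},\underline{\lambda}}(x)>I^{(1)}_{\mathrm{MD}}(x)>0$ if $0<|x|<\delta_{\nu,\lambda}$, $I^{(1)}_{\mathrm{MD}}(x)>I^{(2)}_{\mathrm{MD},\underline{\lambda}}(x)>0$ if $|x|>\delta_{\nu,\lambda}$, and $I^{(2)}_{\mathrm{MD},\underline{\lambda}}(x)=I^{(1)}_{\mathrm{MD}}(x)>0$ if $|x|=\delta_{\nu,\lambda}$.
   Context: In the paper these are the moderate deviation rate functions for the fractional Skellam processes of type 1 and type 2 respectively; the claim concerns only the explicitly defined functions above. *)

(* Defs.v *)
From mathcomp Require Import all_boot all_order all_algebra.
From mathcomp Require Import all_classical all_reals all_analysis.
Set Implicit Arguments. Unset Strict Implicit. Unset Printing Implicit Defensive.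
Import Order.TTheory GRing.Theory Num.Theory.
Local Open Scope ring_scope.

Definition c_nu {R : realType} (nu : R) : R :=
  nu `^ (nu / (1 - nu)) - nu `^ (1 / (1 - nu)).

Definition I1_MD {R : realType} (l1 l2 nu : R) (x : R) : R :=
  if 0 <= x then c_nu nu * (x / l1) `^ (1 / (1 - nu))
  else c_nu nu * (x / (- l2)) `^ (1 / (1 - nu)).

Definition I2_MD {R : realType} (l1 l2 nu : R) (x : R) : \bar R :=
  if l1 == l2 then
    (((nu / 2) `^ (nu / (2 - nu)) - (nu / 2) `^ (2 / (2 - nu)))
       * (x ^+ 2 / l1) `^ (1 / (2 - nu)))%:E
  else if l2 < l1 then
    (if 0 <= x then (c_nu nu * (x / (l1 - l2)) `^ (1 / (1 - nu)))%:E
     else +oo%E)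
  else
    (if x <= 0 then (c_nu nu * (x / (- (l2 - l1))) `^ (1 / (1 - nu)))%:E
     else +oo%E).

(* Main.v *)
Require Import Defs.
From mathcomp Require Import all_boot all_order all_algebra.
From mathcomp Require Import all_classical all_reals all_analysis.
From mathcomp Require Import ring lra.
Import Order.TTheory GRing.Theory Num.Theory.
Local Open Scope ring_scope.

Lemma powR_lt_small (R : realType) (u a b : R) :
  0 < u < 1 -> a < b -> u `^ b < u `^ a.
Proof.
move=> /andP[u0 u1] ab.
rewrite /powR gt_eqF // ltr_expR.
have : ln u < 0 by apply: ln_lt0; rewrite u0 u1.
move=> L; nra.
Qed.

Lemma ln_lt (R : realType) (a b : R) : 0 < a -> 0 < b -> (a < b) = (ln a < ln b).
Proof. by move=> a0 b0; rewrite ltr_ln ?posrE. Qed.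

Lemma c_nu_gt0 (R : realType) (nu : R) : 0 < nu < 1 -> 0 < c_nu nu.
Proof.
move=> /[dup] H /andP[n0 n1]; rewrite /c_nu subr_gt0; apply: powR_lt_small => //.
rewrite ltr_pM2r ?invr_gt0 ?subr_gt0 //.
Qed.

Lemma d_gt0 (R : realType) (nu : R) : 0 < nu < 1 ->
  0 < (nu / 2) `^ (nu / (2 - nu)) - (nu / 2) `^ (2 / (2 - nu)).
Proof.
move=> /andP[n0 n1]; rewrite subr_gt0; apply: powR_lt_small.
  by apply/andP; split; lra.
rewrite ltr_pM2r ?invr_gt0; lra.
Qed.

Arguments c_nu_gt0 {R nu}.
Arguments d_gt0 {R nu}.
Arguments ln_lt {R a b}.

Theorem proposition5p3 (R : realType) (l1 l2 nu : R) :
  0 < l1 -> 0 < l2 -> 0 < nu < 1 ->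
  [/\ I1_MD l1 l2 nu 0 = 0, I2_MD l1 l2 nu 0 = 0%E,
      (l1 != l2 -> forall x : R, x != 0 ->
         ((I1_MD l1 l2 nu x)%:E < I2_MD l1 l2 nu x)%E /\ 0 < I1_MD l1 l2 nu x)
    & (l1 = l2 -> exists2 delta : R, 0 < delta &
         forall x : R, x != 0 ->
           [/\ `|x| < delta ->
                 ((I1_MD l1 l2 nu x)%:E < I2_MD l1 l2 nu x)%E /\ 0 < I1_MD l1 l2 nu x,
               delta < `|x| ->
                 (I2_MD l1 l2 nu x < (I1_MD l1 l2 nu x)%:E)%E /\ (0 < I2_MD l1 l2 nu x)%E
             & `|x| = delta ->
                 I2_MD l1 l2 nu x = (I1_MD l1 l2 nu x)%:E /\ 0 < I1_MD l1 l2 nu x])].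
Proof.
move=> l10 l20 /[dup] nuH /andP[n0 n1].
have c0 := c_nu_gt0 nuH.
have d0 := d_gt0 nuH.
have p0 : 0 < 1 / (1 - nu) by rewrite divr_gt0 // subr_gt0.
have q0 : 0 < 1 / (2 - nu) by rewrite divr_gt0 //; lra.
split.
- by rewrite /I1_MD lexx mul0r powR0 ?mulr0 // gt_eqF.
- rewrite /I2_MD; case: eqP => _.
    by rewrite expr0n /= mul0r powR0 ?mulr0 // gt_eqF.
  by case: ifP => _; rewrite lexx mul0r powR0 ?mulr0 // gt_eqF.
- have key : forall a b : R, 0 < a -> a < b ->
      c_nu nu * a `^ (1 / (1 - nu)) < c_nu nu * b `^ (1 / (1 - nu)).
    move=> a b a0 ab; rewrite ltr_pM2l //; apply: gt0_ltr_powR => //;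
      by rewrite nnegrE ltW // (lt_trans a0).
  have pos : forall a : R, 0 < a -> 0 < c_nu nu * a `^ (1 / (1 - nu)).
    by move=> a a0; rewrite mulr_gt0 // powR_gt0.
  have hneg : forall y l : R, y < 0 -> 0 < l -> 0 < y / - l.
    by move=> y l y0 l0; rewrite invrN mulrN -mulNr divr_gt0 // oppr_gt0.
  move=> l12 x x0; rewrite /I1_MD /I2_MD (negbTE l12).
  have [l21|l12'] := ltP l2 l1.
  + case: (ltgtP x 0) x0 => // hx _.
    * rewrite ?(ltW hx) ?(leNgt 0 x) ?(leNgt x 0) ?hx /= ltry; split => //; apply: pos.
      by apply: hneg.
    * rewrite ?(ltW hx) ?(leNgt 0 x) ?(leNgt x 0) ?hx /= lte_fin; split; last by apply: pos; rewrite divr_gt0.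
      apply: key; first by rewrite divr_gt0.
      rewrite ltr_pM2l // ltf_pV2 ?posrE ?subr_gt0 //; lra.
  + have l12s : l1 < l2 by rewrite lt_neqAle l12 l12'.
    case: (ltgtP x 0) x0 => // hx _.
    * rewrite ?(ltW hx) ?(leNgt 0 x) ?(leNgt x 0) ?hx /= lte_fin; split; last first.
        by apply: pos; apply: hneg.
      apply: key; first by apply: hneg.
      rewrite !invrN !mulrN ltrN2 ltr_nM2l // ltf_pV2 ?posrE ?subr_gt0 //; lra.
    * rewrite ?(ltW hx) ?(leNgt 0 x) ?(leNgt x 0) ?hx /= ltry; split => //; apply: pos.
      by rewrite divr_gt0.
- move=> E; subst l2.
  set p := 1 / (1 - nu); set q := 1 / (2 - nu).
  set c := c_nu nu.
  set d := (nu / 2) `^ (nu / (2 - nu)) - (nu / 2) `^ (2 / (2 - nu)).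
  set D := p - 2 * q.
  have D0 : 0 < D.
    have -> : D = nu / ((1 - nu) * (2 - nu)).
      rewrite /D /p /q; field.
      by apply/andP; split; apply/negP => /eqP; lra.
    by rewrite divr_gt0 // mulr_gt0 //; lra.
  set A := ln d - ln c + (p - q) * ln l1.
  set M := A / D.
  have HM : D * M = A by rewrite /M mulrC divfK // gt_eqF.
  exists (expR M); first exact: expR_gt0.
  move=> x x0.
  have ax : 0 < `|x| by rewrite normr_gt0.
  have ax1 : 0 < `|x| / l1 by rewrite divr_gt0.
  have ax2 : 0 < `|x| ^+ 2 / l1 by rewrite divr_gt0 // exprn_gt0.
  have hI1 : I1_MD l1 l1 nu x = c * (`|x| / l1) `^ p.
    rewrite /I1_MD; case: (ltgtP x 0) x0 => // hx _.
      by rewrite ltr0_norm // invrN mulrN mulNr.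
    by rewrite ger0_norm // ltW.
  have hI2 : I2_MD l1 l1 nu x = (d * (`|x| ^+ 2 / l1) `^ q)%:E.
    by rewrite /I2_MD eqxx real_normK // num_real.
  have F1p : 0 < c * (`|x| / l1) `^ p by rewrite mulr_gt0 // powR_gt0.
  have F2p : 0 < d * (`|x| ^+ 2 / l1) `^ q by rewrite mulr_gt0 // powR_gt0.
  have lnF : ln (d * (`|x| ^+ 2 / l1) `^ q) - ln (c * (`|x| / l1) `^ p)
             = D * (M - ln `|x|).
    rewrite !lnM ?posrE ?powR_gt0 // !ln_powR !ln_div ?posrE ?exprn_gt0 //.
    rewrite lnXn // !mulrBr HM /A /D; ring.
  have lnd : (`|x| < expR M) = (ln `|x| < M).
    by rewrite (ln_lt ax (expR_gt0 M)) expRK.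
  have lnd' : (expR M < `|x|) = (M < ln `|x|).
    by rewrite (ln_lt (expR_gt0 M) ax) expRK.
  rewrite hI1 hI2; split.
  + rewrite lnd => h; split => //; rewrite lte_fin (ln_lt F1p F2p).
    rewrite -subr_gt0 lnF mulr_gt0 // subr_gt0 //.
  + rewrite lnd' => h; split; last by rewrite lte_fin.
    rewrite lte_fin (ln_lt F2p F1p) -subr_lt0 lnF pmulr_rlt0 // subr_lt0 //.
  + move=> h; split => //; congr (_%:E).
    apply: ln_inj; rewrite ?posrE //; apply/eqP; rewrite -subr_eq0 lnF h expRK.
    by rewrite subrr mulr0.
Qed.
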